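(* Let $\rho\in\mathcal{D}(\mathbb{C}^m\otimes\mathbb{C}^n)$ be a separable state. Then for any $w,y\in[m]$ and $x,z\in[n]$, $$|\langle wx|\rho|yz\rangle|\le\sqrt{\min\big(\langle wx|\rho|wx\rangle,\langle wz|\rho|wz\rangle,\langle yx|\rho|yx\rangle,\langle yz|\rho|yz\rangle\big)},$$ and moreover $$|\langle wx|\rho|yz\rangle|\le\tfrac12\min\big(\langle wx|\rho|wx\rangle+\langle yz|\rho|yz\rangle,\ \langle wz|\rho|wz\rangle+\langle yx|\rho|yx\rangle\big).$$
   Context: $\mathcal{D}(\mathcal{H})$ denotes the set of density matrices on $\mathcal{H}$; $|wx\rangle=|w\rangle\otimes|x\rangle$ denotes computational basis vectors. A state is separable if it is a convex combination of product states $M\otimes N$ with $M,N$ density matrices. *)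

(* Defs.v *)
From mathcomp Require Import all_boot all_order all_algebra.
From mathcomp Require Import mxtens.
Set Implicit Arguments. Unset Strict Implicit. Unset Printing Implicit Defensive.
Import Order.TTheory GRing.Theory Num.Theory.
Local Open Scope ring_scope.

Definition adjmx (C : numClosedFieldType) (p q : nat) (A : 'M[C]_(p, q)) : 'M[C]_(q, p) :=
  (map_mx Num.conj A)^T.

Definition psdmx (C : numClosedFieldType) (d : nat) (A : 'M[C]_d) : Prop :=
  adjmx A = A /\ forall v : 'cV[C]_d, 0 <= (adjmx v *m A *m v) 0 0.

Definition density (C : numClosedFieldType) (d : nat) (A : 'M[C]_d) : Prop :=
  psdmx A /\ \tr A = 1.

Definition separable (C : numClosedFieldType) (m n : nat) (rho : 'M[C]_(m * n)) : Prop :=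
  exists (k : nat) (p : 'I_k -> C) (M : 'I_k -> 'M[C]_m) (N : 'I_k -> 'M[C]_n),
    [/\ forall i, 0 <= p i, \sum_i p i = 1,
        forall i, density (M i), forall i, density (N i) &
        rho = \sum_i p i *: (M i *t N i)].

Definition ket (C : numClosedFieldType) (d : nat) (i : 'I_d) : 'cV[C]_d := delta_mx i 0.

Definition ket2 (C : numClosedFieldType) (m n : nat) (w : 'I_m) (x : 'I_n) : 'cV[C]_(m * n) :=
  (ket C w) *t (ket C x).

Definition braket (C : numClosedFieldType) (d : nat) (u : 'cV[C]_d) (A : 'M[C]_d) (v : 'cV[C]_d) : C :=
  (adjmx u *m A *m v) 0 0.

(* Main.v *)
Require Import Defs.
From mathcomp Require Import all_boot all_order all_algebra.
From mathcomp Require Import mxtens ring.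
Set Implicit Arguments. Unset Strict Implicit. Unset Printing Implicit Defensive.
Import Order.TTheory GRing.Theory Num.Theory.
Local Open Scope ring_scope.

Lemma adj_delta {C : numClosedFieldType} d (a : 'I_d) : adjmx (delta_mx a 0 : 'cV[C]_d) = delta_mx 0 a.
Proof.
apply/matrixP=> i j; rewrite !mxE.
by case: (j == a); case: (i == 0); rewrite /= ?rmorph1 ?rmorph0.
Qed.

Lemma adjD {C : numClosedFieldType} d (u v : 'cV[C]_d) al be :
  adjmx (al *: u + be *: v) = al^* *: adjmx u + be^* *: adjmx v.
Proof. by apply/matrixP=> i j; rewrite !mxE rmorphD !rmorphM. Qed.

Lemma braket_delta {C : numClosedFieldType} d (A : 'M[C]_d) a b :
  braket (delta_mx a 0) A (delta_mx b 0) = A a b.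
Proof. by rewrite /braket adj_delta -rowE -colE !mxE. Qed.

Lemma braket2 {C : numClosedFieldType} d (A : 'M[C]_d) a b al be :
  let v := al *: delta_mx a 0 + be *: delta_mx b 0 in
  braket v A v = al^* * al * A a a + al^* * be * A a b + be^* * al * A b a
     + be^* * be * A b b.
Proof.
rewrite /= /braket adjD !mulmxDl !mulmxDr -!scalemxAl -!scalemxAr.
rewrite !adj_delta -!rowE -!colE !mxE; ring.
Qed.

Lemma psd_diag {C : numClosedFieldType} {d} {A : 'M[C]_d} a : psdmx A -> 0 <= A a a.
Proof. by case=> _ /(_ (delta_mx a 0)); rewrite -/(braket _ _ _) braket_delta. Qed.

Lemma psd_herm {C : numClosedFieldType} {d} {A : 'M[C]_d} a b : psdmx A -> A b a = (A a b)^*.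
Proof. by case=> /matrixP /(_ b a) <- _; rewrite !mxE. Qed.

Lemma psd_minor {C : numClosedFieldType} d (A : 'M[C]_d) a b : psdmx A ->
  `|A a b| ^+ 2 <= A a a * A b b.
Proof.
move=> hA; have c0 := psd_diag a hA; have d0 := psd_diag b hA.
have hq al be : 0 <= al^* * al * A a a + al^* * be * A a b + be^* * al * (A a b)^*
     + be^* * be * A b b.
  have := hA.2 (al *: delta_mx a 0 + be *: delta_mx b 0).
  by rewrite -/(braket _ _ _) braket2 (psd_herm a b hA).
set r := A a b in hq *; set c := A a a in c0 hq *; set e := A b b in d0 hq *.
have cc : c^* = c by rewrite geC0_conj.
have ce : e^* = e by rewrite geC0_conj.
rewrite normCK -subr_ge0.
have h1 := hq e (- r^*); rewrite rmorphN /= conjCK ce in h1.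
have h2 := hq (- r) c; rewrite rmorphN /= cc in h2.
have h3 := hq 1 (- r^*); rewrite rmorphN /= conjCK rmorph1 in h3.
move: c0; rewrite le_eqVlt => /orP[/eqP c0|cp].
  move: d0; rewrite le_eqVlt => /orP[/eqP d0|dp].
    rewrite -c0 -d0 in h3 *.
    have : 0 <= - (r * r^*) *+ 2 by move: h3; congr (_ <= _); ring.
    by rewrite pmulrn_lge0 // => h; rewrite mul0r add0r.
  have : 0 <= e * (c * e - r * r^*) by move: h1; congr (_ <= _); ring.
  by rewrite pmulr_rge0.
have : 0 <= c * (c * e - r * r^*) by move: h2; congr (_ <= _); ring.
by rewrite pmulr_rge0.
Qed.


Lemma ket2_delta {C : numClosedFieldType} m n (w : 'I_m) (x : 'I_n) :
  ket2 C w x = delta_mx (mxtens_index (w, x)) 0.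
Proof.
apply/matrixP=> i j; case: (mxtens_indexP i) => a b.
rewrite /ket2 /ket !mxE !mxtens_indexK /=.
have o1 : forall k : 'I_1, (k == 0) = true by move=> k; rewrite (ord1 k).
rewrite !o1 !andbT.
have -> : (mxtens_index (a, b) == mxtens_index (w, x)) = (a == w) && (b == x).
  apply/eqP/andP => [/(can_inj (@mxtens_indexK _ _))[-> ->]|[/eqP-> /eqP->]] //.
by case: (a == w); case: (b == x); rewrite /= ?mulr1 ?mulr0 ?mul0r.
Qed.

Lemma braket_ket2 {C : numClosedFieldType} m n (A : 'M[C]_(m * n)) w x y z :
  braket (ket2 C w x) A (ket2 C y z) = A (mxtens_index (w, x)) (mxtens_index (y, z)).
Proof. by rewrite !ket2_delta braket_delta. Qed.

Lemma sep_entry {C : numClosedFieldType} m n k (p : 'I_k -> C) (M : 'I_k -> 'M[C]_m) (N : 'I_k -> 'M[C]_n) w x y z :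
  (\sum_i p i *: (M i *t N i)) (mxtens_index (w, x)) (mxtens_index (y, z))
  = \sum_i p i * (M i w y * N i x z).
Proof. by rewrite summxE; apply: eq_bigr => i _; rewrite mxE tensmxE. Qed.

Lemma CS {C : numClosedFieldType} k (p t u v : 'I_k -> C) :
  (forall i, 0 <= p i) -> (forall i, 0 <= t i) -> (forall i, 0 <= u i) ->
  (forall i, 0 <= v i) -> (forall i, t i ^+ 2 <= u i * v i) ->
  (\sum_i p i * t i) ^+ 2 <= (\sum_i p i * u i) * (\sum_i p i * v i).
Proof.
move=> p0 t0 u0 v0 tuv.
have key i j : (t i * t j) *+ 2 <= u i * v j + u j * v i.
  have h1 : 0 <= (t i * t j) *+ 2 by rewrite mulrn_wge0 // mulr_ge0.
  have h2 : 0 <= u i * v j + u j * v i by rewrite addr_ge0 // mulr_ge0.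
  rewrite -ler_sqr; [|by rewrite nnegrE|by rewrite nnegrE].
  have Ri : u i * v j \is Num.real by rewrite ger0_real // mulr_ge0.
  have Rj : u j * v i \is Num.real by rewrite ger0_real // mulr_ge0.
  apply: le_trans (real_leif_AGM2_scaled Ri Rj).1.
  have -> : ((t i * t j) *+ 2) ^+ 2 = (t i ^+ 2 * t j ^+ 2) *+ 4.
    by rewrite -[in LHS]mulr_natr -[in RHS]mulr_natr; ring.
  rewrite lerMn2r /=.
  apply: le_trans (ler_pM _ _ (tuv i) (tuv j)) _; rewrite ?exprn_ge0 //.
  by rewrite le_eqVlt; apply/orP; left; apply/eqP; ring.
have hm (a b : C) : a *+ 2 <= b *+ 2 -> a <= b by rewrite lerMn2r.
apply: hm.
have -> : (\sum_i p i * t i) ^+ 2 *+ 2 = \sum_i \sum_j (p i * p j) * ((t i * t j) *+ 2).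
  rewrite expr2 mulr_suml -sumrMnl; apply: eq_bigr => i _.
  rewrite mulr_sumr -sumrMnl; apply: eq_bigr => j _.
  by rewrite -[in LHS]mulr_natr -[in RHS]mulr_natr; ring.
have -> : (\sum_i p i * u i) * (\sum_i p i * v i) *+ 2 =
    \sum_i \sum_j (p i * p j) * (u i * v j + u j * v i).
  have e1 : (\sum_i p i * u i) * (\sum_i p i * v i) =
      \sum_i \sum_j (p i * p j) * (u i * v j).
    rewrite mulr_suml; apply: eq_bigr => i _.
    rewrite mulr_sumr; apply: eq_bigr => j _; ring.
  have e2 : (\sum_i p i * u i) * (\sum_i p i * v i) =
      \sum_i \sum_j (p i * p j) * (u j * v i).
    rewrite e1 exchange_big; apply: eq_bigr => i _; apply: eq_bigr => j _; ring.
  rewrite mulr2n {1}e1 e2 -big_split; apply: eq_bigr => i _.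
  rewrite -big_split; apply: eq_bigr => j _ /=; ring.
apply: ler_sum => i _; apply: ler_sum => j _.
by apply: ler_wpM2l; rewrite ?mulr_ge0.
Qed.

Lemma diag_le1 {C : numClosedFieldType} d (A : 'M[C]_d) a : density A -> A a a <= 1.
Proof.
case=> hA <-; rewrite /mxtrace (bigD1 a) //= lerDl.
by apply: sumr_ge0 => i _; apply: psd_diag.
Qed.


Lemma AMb {C : numClosedFieldType} (E a b : C) : 0 <= E -> 0 <= a -> 0 <= b ->
  E ^+ 2 <= a * b -> E <= 2^-1 * (a + b).
Proof.
move=> E0 a0 b0 h.
have h2 : E *+ 2 <= a + b.
  rewrite -ler_sqr; [|by rewrite nnegrE mulrn_wge0|by rewrite nnegrE addr_ge0].
  have Ra : a \is Num.real by rewrite ger0_real.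
  have Rb : b \is Num.real by rewrite ger0_real.
  apply: le_trans (real_leif_AGM2_scaled Ra Rb).1.
  have -> : (E *+ 2) ^+ 2 = (E ^+ 2) *+ 4.
    by rewrite -[in LHS]mulr_natr -[in RHS]mulr_natr; ring.
  by rewrite lerMn2r.
rewrite -subr_ge0.
have -> : 2^-1 * (a + b) - E = 2^-1 * ((a + b) - E *+ 2).
  by rewrite mulr2n; field.
by rewrite mulr_ge0 // ?invr_ge0 ?ler0n // subr_ge0.
Qed.

Lemma sqb {C : numClosedFieldType} (E D : C) : 0 <= E -> 0 <= D -> E ^+ 2 <= D -> E <= sqrtC D.
Proof.
move=> E0 D0 h; rewrite -(sqrCK E0) ler_sqrtC // nnegrE ?exprn_ge0 //.
Qed.

Lemma minP {C : numClosedFieldType} (a b : C) (P : C -> Prop) : P a -> P b -> P (Num.min a b).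
Proof. rewrite /Num.min /Order.min; by case: ifP. Qed.

Lemma eqle {C : numClosedFieldType} (a b : C) : a = b -> a <= b.
Proof. by move->. Qed.

Theorem lemma4p3 (C : numClosedFieldType) (m n : nat) (rho : 'M[C]_(m * n)) :
  density rho -> separable rho ->
  forall (w y : 'I_m) (x z : 'I_n),
    let e := braket (ket2 C w x) rho (ket2 C y z) in
    let dwx := braket (ket2 C w x) rho (ket2 C w x) in
    let dwz := braket (ket2 C w z) rho (ket2 C w z) in
    let dyx := braket (ket2 C y x) rho (ket2 C y x) in
    let dyz := braket (ket2 C y z) rho (ket2 C y z) in
    `|e| <= sqrtC (Num.min (Num.min dwx dwz) (Num.min dyx dyz)) /\
    `|e| <= 2^-1 * Num.min (dwx + dyz) (dwz + dyx).
Proof.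
move=> hd [k [p [M [N [p0 p1 hM hN Hr]]]]] w y x z e dwx dwz dyx dyz.
have dge0 a b c d : 0 <= braket (ket2 C a b) rho (ket2 C c d) -> True by [].
have hdwx0 : 0 <= dwx by rewrite /dwx braket_ket2; apply: psd_diag hd.1.
have hdwz0 : 0 <= dwz by rewrite /dwz braket_ket2; apply: psd_diag hd.1.
have hdyx0 : 0 <= dyx by rewrite /dyx braket_ket2; apply: psd_diag hd.1.
have hdyz0 : 0 <= dyz by rewrite /dyz braket_ket2; apply: psd_diag hd.1.
have hdwx1 : dwx <= 1 by rewrite /dwx braket_ket2; apply: diag_le1 hd.
have hdwz1 : dwz <= 1 by rewrite /dwz braket_ket2; apply: diag_le1 hd.
have hdyx1 : dyx <= 1 by rewrite /dyx braket_ket2; apply: diag_le1 hd.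
have hdyz1 : dyz <= 1 by rewrite /dyz braket_ket2; apply: diag_le1 hd.
have He : e = \sum_i p i * (M i w y * N i x z) by rewrite /e braket_ket2 Hr sep_entry.
have Swx : dwx = \sum_i p i * (M i w w * N i x x) by rewrite /dwx braket_ket2 Hr sep_entry.
have Swz : dwz = \sum_i p i * (M i w w * N i z z) by rewrite /dwz braket_ket2 Hr sep_entry.
have Syx : dyx = \sum_i p i * (M i y y * N i x x) by rewrite /dyx braket_ket2 Hr sep_entry.
have Syz : dyz = \sum_i p i * (M i y y * N i z z) by rewrite /dyz braket_ket2 Hr sep_entry.
have E0 : 0 <= `|e| by [].
pose t i := `|M i w y| * `|N i x z|.
have t0 i : 0 <= t i by rewrite mulr_ge0.
have Et : `|e| <= \sum_i p i * t i.
  rewrite He; apply: le_trans (ler_norm_sum _ _ _) _; apply: ler_sum => i _.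
  by rewrite normrM (ger0_norm (p0 i)) normrM.
have E2 : `|e| ^+ 2 <= (\sum_i p i * t i) ^+ 2.
  rewrite ler_sqr ?nnegrE //; apply: sumr_ge0 => i _; exact: mulr_ge0.
have tb i : t i ^+ 2 <= (M i w w * M i y y) * (N i x x * N i z z).
  by rewrite /t exprMn ler_pM ?exprn_ge0 // psd_minor //; [exact: (hM i).1|exact: (hN i).1].
have Mg i a : 0 <= M i a a by apply: psd_diag (hM i).1.
have Ng i a : 0 <= N i a a by apply: psd_diag (hN i).1.
have F1 : `|e| ^+ 2 <= dwx * dyz.
  apply: le_trans E2 _; rewrite Swx Syz; apply: CS => // i; rewrite ?mulr_ge0 //.
  by apply: le_trans (tb i) (eqle _); ring.
have F2 : `|e| ^+ 2 <= dwz * dyx.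
  apply: le_trans E2 _; rewrite Swz Syx; apply: CS => // i; rewrite ?mulr_ge0 //.
  by apply: le_trans (tb i) (eqle _); ring.
split.
  apply: (minP (P := fun D => `|e| <= sqrtC D)).
    apply: (minP (P := fun D => `|e| <= sqrtC D)); apply: sqb => //.
      by apply: le_trans F1 _; rewrite ler_piMr.
    by apply: le_trans F2 _; rewrite ler_piMr.
  apply: (minP (P := fun D => `|e| <= sqrtC D)); apply: sqb => //.
    by apply: le_trans F2 _; rewrite ler_piMl.
  by apply: le_trans F1 _; rewrite ler_piMl.
apply: (minP (P := fun D => `|e| <= 2^-1 * D)); exact: AMb.
Qed.
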